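(* Let $n\ge 2$, let $m\ge3$ be odd, let $\mathcal{A}$ be an $m$th order $n$-dimensional complete Hankel tensor, and let $x=(x_1,\dots,x_n)^\top$ be a Z-eigenvector of $\mathcal{A}$ associated with a Z-eigenvalue $\lambda$. If $\lambda>0$, then $x_i\ge0$ for all odd $i$ and $x_1>0$; if $\lambda<0$, then $x_i\le 0$ for all odd $i$ and $x_1<0$.
   Context: A complete Hankel tensor is a tensor of the form $\mathcal{A}=\sum_{k=1}^r\alpha_k(u_k)^m$ with $\alpha_k>0$, $u_k=(1,u_k,u_k^2,\dots,u_k^{n-1})^\top$ for pairwise distinct reals $u_1,\dots,u_r$, where $w^m$ denotes the tensor with entries $w_{i_1}\cdots w_{i_m}$. For $\mathcal{A}=(a_{i_1\cdots i_m})$ and $x\in\mathbb{R}^n$, $\mathcal{A}x^{m-1}$ is the vector with $i$th component $\sum_{i_2,\dots,i_m=1}^n a_{ii_2\cdots i_m}x_{i_2}\cdots x_{i_m}$. A real $\lambda$ is a Z-eigenvalue with Z-eigenvector $x\in\mathbb{R}^n$ if $x^\top x=1$ and $\mathcal{A}x^{m-1}=\lambda x$. *)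

(* Defs.v *)
From HB Require Import structures.
From mathcomp Require Import all_boot all_order all_algebra.
Set Implicit Arguments. Unset Strict Implicit. Unset Printing Implicit Defensive.
Import Order.TTheory GRing.Theory Num.Theory.
Local Open Scope ring_scope.

(* An m-th order n-dimensional real tensor: entries a_{i_1 ... i_m} indexed by
   functions 'I_m -> 'I_n (0-based indices). *)
Definition tensor (R : Type) (m n : nat) : Type := {ffun 'I_m -> 'I_n} -> R.

Definition rank_one (R : nzRingType) (m n : nat) (w : 'I_n -> R) : tensor R m n :=
  fun g => \prod_(j < m) w (g j).

Definition vander_vec (R : nzRingType) (n : nat) (u : R) : 'I_n -> R :=
  fun i => u ^+ i.

Definition complete_hankel (R : realFieldType) (m n : nat) (A : tensor R m n) : Prop :=
  exists (r : nat) (alpha u : 'I_r -> R),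
    (forall k, 0 < alpha k) /\ injective u /\
    forall g, A g = \sum_(k < r) alpha k * @rank_one R m n (@vander_vec R n (u k)) g.

(* (A x^{m-1})_i = sum_{i_2..i_m} a_{i i_2 ... i_m} x_{i_2} ... x_{i_m}:
   sum over all index functions whose first index is i. *)
Definition tensor_apply (R : nzRingType) (m n : nat) (A : tensor R m n)
    (x : 'I_n -> R) (i : 'I_n) : R :=
  \sum_(g : {ffun 'I_m -> 'I_n} | [forall j : 'I_m, (val j == 0%N) ==> (g j == i)])
     A g * \prod_(j < m | val j != 0%N) x (g j).

Definition Z_eigenpair (R : nzRingType) (m n : nat) (A : tensor R m n)
    (lambda : R) (x : 'I_n -> R) : Prop :=
  \sum_(i < n) x i ^+ 2 = 1 /\ forall i, tensor_apply A x i = lambda * x i.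

(* Main.v *)
Require Import Defs.
From HB Require Import structures.
From mathcomp Require Import all_boot all_order all_algebra.
Import Order.TTheory GRing.Theory Num.Theory.
Local Open Scope ring_scope.
Lemma key (R : comNzRingType) (n m' : nat) (i : 'I_n) (f : 'I_n -> R) :
 \sum_(g : {ffun 'I_m'.+1 -> 'I_n} | [forall j : 'I_m'.+1, (val j == 0%N) ==> (g j == i)])
    \prod_(j < m'.+1 | val j != 0%N) f (g j) = (\sum_l f l) ^+ m'.
Proof.
pose F := fun (j : 'I_m'.+1) (l : 'I_n) => if val j == 0%N then (l == i)%:R else f l.
have -> : (\sum_l f l) ^+ m' = \prod_(j < m'.+1) \sum_l F j l.
  rewrite big_ord_recl /F /=.
  have -> : \sum_(l < n) ((l == i)%:R : R) = 1.
    rewrite (bigD1 i) //= eqxx big1 ?addr0 //.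
    by move=> l /negbTE ->.
  rewrite mul1r.
  by rewrite prodr_const card_ord.
rewrite bigA_distr_bigA big_mkcond /=; apply: eq_bigr => g _.
rewrite big_ord_recl /F /=.
have -> : [forall j : 'I_m'.+1, (val j == 0%N) ==> (g j == i)] = (g ord0 == i).
  apply/forallP/idP => [/(_ ord0) //|H j]; apply/implyP => /eqP j0.
  have -> : j = ord0 by apply/val_inj.
  exact: H.
rewrite big_mkcond big_ord_recl /=.
case: (g ord0 == i); rewrite ?mul1r ?mul0r //=.
Qed.

Lemma apply_hankel (R : realFieldType) m' n r (alpha u : 'I_r -> R)
  (A : tensor R m'.+1 n) x i :
 (forall g, A g = \sum_k alpha k * @rank_one R m'.+1 n (@vander_vec R n (u k)) g) ->
 tensor_apply A x i = \sum_k alpha k * (u k ^+ i * (\sum_(l < n) u k ^+ l * x l) ^+ m').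
Proof.
move=> HA; rewrite /tensor_apply.
under eq_bigr => g _ do rewrite HA mulr_suml.
rewrite exchange_big /=; apply: eq_bigr => k _.
under eq_bigr => g _ do rewrite -mulrA.
rewrite -mulr_sumr; congr (_ * _).
rewrite -(@key _ n m' i (fun l => u k ^+ l * x l)) mulr_sumr; apply: eq_bigr => g Pg.
have g0 : g ord0 = i by move/forallP: Pg => /(_ ord0) /= /eqP.
rewrite /rank_one /vander_vec big_ord_recl g0 -mulrA; congr (_ * _).
rewrite [X in _ = X]big_mkcond [X in _ * X = _]big_mkcond !big_ord_recl /= mul1r.
by rewrite mul1r big_split.
Qed.

Theorem proposition5 (R : realFieldType) (n m : nat) (A : tensor R m n)
    (lambda : R) (x : 'I_n -> R) :
  (2 <= n)%N -> (3 <= m)%N -> odd m ->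
  complete_hankel A -> Z_eigenpair A lambda x ->
  (0 < lambda ->
     (forall i : 'I_n, ~~ odd (val i) -> 0 <= x i) /\
     (forall i : 'I_n, val i = 0%N -> 0 < x i)) /\
  (lambda < 0 ->
     (forall i : 'I_n, ~~ odd (val i) -> x i <= 0) /\
     (forall i : 'I_n, val i = 0%N -> x i < 0)).
Proof.
move=> _ hm3 hodd [r [alpha [u [Hal [_ HA]]]]] [Hx HT].
case: m A hm3 hodd HA HT => [//|m'] A hm3 hodd HA HT.
have m0 : (0 < m')%N by rewrite ltnS in hm3; apply: ltnW.
have em : ~~ odd m' by move: hodd => /=; case: (odd m').
have HT' := fun i => @apply_hankel _ _ _ _ _ _ A x i HA.
have Tge0 : forall i : 'I_n, ~~ odd (val i) -> 0 <= tensor_apply A x i.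
  move=> i hi; rewrite HT'; apply: sumr_ge0 => k _.
  apply: mulr_ge0; first exact: ltW.
  by apply: mulr_ge0; apply: exprn_even_ge0.
have T0 : forall i0 : 'I_n, val i0 = 0%N -> tensor_apply A x i0 = 0 ->
    forall i, tensor_apply A x i = 0.
  move=> i0 hi0 H0 i; rewrite HT'; apply: big1 => k _.
  move: H0; rewrite HT' => H0.
  have := psumr_eq0P _ H0 (i := k) isT.
  have : forall k' : 'I_r, true -> 0 <= alpha k' * (u k' ^+ i0 * (\sum_(l < n) u k' ^+ l * x l) ^+ m').
    move=> k' _; rewrite hi0 expr0 mul1r; apply: mulr_ge0; first exact: ltW.
    exact: exprn_even_ge0.
  move=> H1 /(_ H1).
  rewrite hi0 expr0 mul1r => /eqP; rewrite mulf_eq0 (gt_eqF (Hal k)) /= expf_eq0 => /andP [_ /eqP ->].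
  by rewrite expr0n /= eqn0Ngt m0 /= !mulr0.
have xnz : ~ (forall i, x i = 0).
  move=> H; move: Hx; rewrite big1 => [|i _]; last by rewrite H expr0n.
  by move/eqP; rewrite eq_sym oner_eq0.
have lam_nz : lambda != 0 -> forall i0 : 'I_n, val i0 = 0%N -> x i0 != 0.
  move=> ln i0 hi0; apply/negP => /eqP xi0; apply: xnz => i.
  have := T0 i0 hi0; rewrite HT xi0 mulr0 => /(_ erefl i).
  by rewrite HT => /eqP; rewrite mulf_eq0 (negbTE ln) /= => /eqP.
have ev0 : forall i : 'I_n, val i = 0%N -> ~~ odd (val i) by move=> i ->.
split=> hl.
  have pos : forall i : 'I_n, ~~ odd (val i) -> 0 <= x i.
    by move=> i hi; rewrite -(pmulr_rge0 _ hl) -HT; exact: Tge0.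
  split=> // i hi; rewrite lt_def pos ?ev0 // andbT.
  exact: (lam_nz (negbT (gt_eqF hl)) i hi).
have neg : forall i : 'I_n, ~~ odd (val i) -> x i <= 0.
  by move=> i hi; rewrite -(nmulr_rge0 _ hl) -HT; exact: Tge0.
split=> // i hi; rewrite lt_def neg ?ev0 // andbT.
by rewrite eq_sym; exact: (lam_nz (negbT (lt_eqF hl)) i hi).
Qed.
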